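(* Let $n\ge1$ and let $G$ be the $n\times n$ comparability grid. Let $X\subseteq V(G)$ satisfy $|X|\le n^2/2$ and $r(X)\le n/4$. Then $|X|<n^2/3$.
   Context: For positive integers $m,n$, the $m\times n$ comparability grid is the simple graph with vertex set $\{1,\dots,m\}\times\{1,\dots,n\}$ in which distinct vertices $(i,j)$ and $(i',j')$ are adjacent iff either ($i\le i'$ and $j\le j'$) or ($i\ge i'$ and $j\ge j'$). For a graph $G$ and $X\subseteq V(G)$, the cut-rank $r(X)$ is the rank over $\mathrm{GF}(2)$ of the submatrix of the adjacency matrix of $G$ with rows indexed by $X$ and columns indexed by $V(G)\setminus X$. *)

(* Defs.v *)
From mathcomp Require Import all_boot all_algebra.
Set Implicit Arguments. Unset Strict Implicit. Unset Printing Implicit Defensive.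

(* Vertices of the m x n comparability grid: pairs (i,j) with i : 'I_m, j : 'I_n
   (0-indexed; shifting indices does not change the order). *)
Definition grid_vertex (m n : nat) := ('I_m * 'I_n)%type.

Definition cgrid_adj (m n : nat) (u v : grid_vertex m n) : bool :=
  (u != v) &&
  (((u.1 <= v.1) && (u.2 <= v.2)) || ((v.1 <= u.1) && (v.2 <= u.2)))%N.

Definition cut_matrix (T : finType) (adj : rel T) (X : {set T})
  : 'M['F_2]_(#|X|, #|~: X|) :=
  \matrix_(i < #|X|, j < #|~: X|)
     ((adj (enum_val i) (enum_val j))%:R)%R.

Definition cut_rank (T : finType) (adj : rel T) (X : {set T}) : nat :=
  \rank (cut_matrix adj X).

(* Main.v *)
Require Import Defs.
From mathcomp Require Import all_boot all_algebra.
Set Implicit Arguments. Unset Strict Implicit. Unset Printing Implicit Defensive.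
Import GRing.Theory.
From mathcomp Require Import zify.

Lemma rank_mxsub (F : fieldType) m n m' n' (f : 'I_m' -> 'I_m) (g : 'I_n' -> 'I_n) (A : 'M[F]_(m,n)) :
  (\rank (mxsub f g A) <= \rank A)%N.
Proof.
have -> : mxsub f g A = rowsub f (mxsub id g A) by apply/matrixP => i j; rewrite !mxE.
rewrite rowsubE; apply: leq_trans (mxrankM_maxr _ _) _.
rewrite -mxrank_tr -(mxrank_tr A).
have -> : trmx (mxsub id g A) = rowsub g (trmx A) by apply/matrixP => i j; rewrite !mxE.
by rewrite rowsubE mxrankM_maxr.
Qed.

Lemma core (T : finType) (adj : rel T) (X : {set T}) k (f g : 'I_k -> T) :
 (forall s, f s \in X) -> (forall t, g t \in ~: X) ->
 (forall s t, adj (f s) (g t) = (s <= t)%N) -> (k <= cut_rank adj X)%N.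
Proof.
move=> fX gY fg.
set B := mxsub (fun s => enum_rank_in (fX s) (f s)) (fun t => enum_rank_in (gY t) (g t)) (cut_matrix adj X).
have hB : B = (\matrix_(s < k, t < k) (((s <= t)%N)%:R : 'F_2))%R.
  by apply/matrixP => s t; rewrite !mxE !enum_rankK_in // fg.
have : (\rank B <= cut_rank adj X)%N by apply: rank_mxsub.
suff -> : \rank B = k by [].
apply: mxrank_unit; rewrite hB unitmxE -det_tr det_trig.
  by rewrite big1 ?unitr1 // => i _; rewrite !mxE leqnn.
apply/is_trig_mxP => i j lij; rewrite !mxE.
by rewrite leqNgt lij.
Qed.
Lemma enum_sorted {n} (A : {set 'I_n}) : sorted ltn (map val (enum A)).
Proof.
have -> : enum A = [seq x <- enum 'I_n | x \in A].
  by rewrite -!deprecated_filter_index_enum filter_predT.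
rewrite sorted_map; apply: sorted_filter; first by move=> ???; apply: ltn_trans.
by rewrite -sorted_map val_enum_ord iota_ltn_sorted.
Qed.

Lemma enum_val_lt n (A : {set 'I_n}) (s t : 'I_#|A|) : s < t -> enum_val s < enum_val t.
Proof.
move=> st.
have x0 : 'I_n := enum_val s.
rewrite !(enum_val_nth (A:=A) x0).
have H := sorted_ltn_nth ltn_trans 0 (enum_sorted A).
have hs : forall i : 'I_#|A|, i < size (map val (enum A)) by move=> i; rewrite size_map -cardE.
have := H s t (hs s) (hs t) st.
by rewrite !(nth_map x0) -?cardE.
Qed.

Lemma enum_val_le n (A : {set 'I_n}) (s t : 'I_#|A|) : (enum_val s <= enum_val t) = (s <= t).
Proof.
case: (ltngtP s t) => st.
- by rewrite ltnW // enum_val_lt.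
- by apply/negbTE; rewrite -ltnNge enum_val_lt.
- by move/val_inj: st => ->; rewrite !leqnn.
Qed.

Lemma setwit1 (T : finType) (adj : rel T) (X : {set T}) m (A : {set 'I_m}) (F G : 'I_m -> T) :
  (forall i, i \in A -> F i \in X) -> (forall i, i \in A -> G i \in ~: X) ->
  (forall i i', i \in A -> i' \in A -> adj (F i) (G i') = (i <= i')) ->
  #|A| <= cut_rank adj X.
Proof.
move=> FX GY FG.
apply: (@core _ adj X _ (fun s => F (enum_val s)) (fun s => G (enum_val s))).
- by move=> s; apply: FX; apply: enum_valP.
- by move=> s; apply: GY; apply: enum_valP.
- by move=> s t; rewrite FG ?enum_valP // enum_val_le.
Qed.

Lemma setwit2 (T : finType) (adj : rel T) (X : {set T}) m (A : {set 'I_m}) (F G : 'I_m -> T) :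
  (forall i, i \in A -> F i \in X) -> (forall i, i \in A -> G i \in ~: X) ->
  (forall i i', i \in A -> i' \in A -> adj (F i) (G i') = (i' <= i)) ->
  #|A| <= cut_rank adj X.
Proof.
move=> FX GY FG.
apply: (@core _ adj X _ (fun s => F (enum_val (rev_ord s))) (fun s => G (enum_val (rev_ord s)))).
- by move=> s; apply: FX; apply: enum_valP.
- by move=> s; apply: GY; apply: enum_valP.
- move=> s t; rewrite FG ?enum_valP // enum_val_le /=.
  case: s => s hs; case: t => t ht /=; move: hs ht; move: #|_| => k hs ht; apply/idP/idP; lia.
Qed.

Section Grid.
Variable n : nat.
Variable X : {set grid_vertex n n}.
Variable p : 'I_n.
Hypothesis hp : nat_of_ord p = 0.

Definition rowX (i : 'I_n) := [exists j, (i, j) \in X].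
Definition rowY (i : 'I_n) := [exists j, (i, j) \notin X].
Definition colX (j : 'I_n) := [exists i, (i, j) \in X].
Definition colY (j : 'I_n) := [exists i, (i, j) \notin X].

Definition rY i := odflt p [pick j | (i, j) \notin X].
Definition rX i := odflt p [pick j | (i, j) \in X].
Definition cY j := odflt p [pick i | (i, j) \notin X].
Definition cX j := odflt p [pick i | (i, j) \in X].

Lemma rYP i : rowY i -> (i, rY i) \notin X.
Proof. by rewrite /rY; case: pickP => [j ->//|H] /existsP [j hj]; rewrite H in hj. Qed.
Lemma rXP i : rowX i -> (i, rX i) \in X.
Proof. by rewrite /rX; case: pickP => [j ->//|H] /existsP [j hj]; rewrite H in hj. Qed.
Lemma cYP j : colY j -> (cY j, j) \notin X.
Proof. by rewrite /cY; case: pickP => [i ->//|H] /existsP [i hi]; rewrite H in hi. Qed.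
Lemma cXP j : colX j -> (cX j, j) \in X.
Proof. by rewrite /cX; case: pickP => [i ->//|H] /existsP [i hi]; rewrite H in hi. Qed.

Lemma pos_of_ne (b : 'I_n) : b != p -> (b <= p) = false.
Proof.
move=> nb; apply/negbTE; rewrite -ltnNge hp lt0n; apply: contra nb => /eqP b0.
by apply/eqP/val_inj; rewrite /= b0 hp.
Qed.

Lemma ne_XY (u v : grid_vertex n n) : u \in X -> v \notin X -> u != v.
Proof. by move=> hu hv; apply: contraNneq hv => <-. Qed.

Let r := cut_rank (@cgrid_adj n n) X.

Lemma MR_bound : #|[set i | rowX i && rowY i]| <= 2 * r.
Proof.
set A1 := [set i | ((i, p) \in X) && rowY i].
set A2 := [set i | ((i, p) \notin X) && rowX i].
have sub : [set i | rowX i && rowY i] \subset A1 :|: A2.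
  apply/subsetP => i; rewrite !inE => /andP [hx hy].
  by case: ((i, p) \in X); rewrite ?hx ?hy.
apply: leq_trans (subset_leq_card sub) _; rewrite cardsU.
have h1 : #|A1| <= r.
  apply: (@setwit1 _ _ X _ A1 (fun i => (i, p)) (fun i => (i, rY i))).
  - by move=> i; rewrite inE => /andP [].
  - by move=> i; rewrite inE in_setC => /andP [_ /rYP].
  move=> i i'; rewrite !inE => /andP [hi hyi] /andP [hi' hyi'].
  have hv := rYP hyi'.
  have nb : rY i' != p by apply: contraNneq hv => ->.
  rewrite /cgrid_adj /= (ne_XY hi hv) /= pos_of_ne // hp leq0n.
  by rewrite andbT andbF orbF.
have h2 : #|A2| <= r.
  apply: (@setwit2 _ _ X _ A2 (fun i => (i, rX i)) (fun i => (i, p))).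
  - by move=> i; rewrite inE => /andP [_ /rXP].
  - by move=> i; rewrite inE in_setC => /andP [].
  move=> i i'; rewrite !inE => /andP [hi hxi] /andP [hi' hxi'].
  have hu := rXP hxi.
  have nb : rX i != p by apply: contraTneq hu => ->.
  rewrite /cgrid_adj /= (ne_XY hu hi') /= pos_of_ne // hp leq0n.
  by rewrite andbT andbF.
lia.
Qed.

Lemma MC_bound : #|[set j | colX j && colY j]| <= 2 * r.
Proof.
set A1 := [set j | ((p, j) \in X) && colY j].
set A2 := [set j | ((p, j) \notin X) && colX j].
have sub : [set j | colX j && colY j] \subset A1 :|: A2.
  apply/subsetP => i; rewrite !inE => /andP [hx hy].
  by case: ((p, i) \in X); rewrite ?hx ?hy.
apply: leq_trans (subset_leq_card sub) _; rewrite cardsU.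
have h1 : #|A1| <= r.
  apply: (@setwit1 _ _ X _ A1 (fun j => (p, j)) (fun j => (cY j, j))).
  - by move=> i; rewrite inE => /andP [].
  - by move=> i; rewrite inE in_setC => /andP [_ /cYP].
  move=> i i'; rewrite !inE => /andP [hi hyi] /andP [hi' hyi'].
  have hv := cYP hyi'.
  have nb : cY i' != p by apply: contraNneq hv => ->.
  rewrite /cgrid_adj /= (ne_XY hi hv) /= pos_of_ne // hp leq0n.
  by rewrite /= orbF.
have h2 : #|A2| <= r.
  apply: (@setwit2 _ _ X _ A2 (fun j => (cX j, j)) (fun j => (p, j))).
  - by move=> i; rewrite inE => /andP [_ /cXP].
  - by move=> i; rewrite inE in_setC => /andP [].
  move=> i i'; rewrite !inE => /andP [hi hxi] /andP [hi' hxi'].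
  have hu := cXP hxi.
  have nb : cX i != p by apply: contraTneq hu => ->.
  rewrite /cgrid_adj /= (ne_XY hu hi') /= pos_of_ne // hp leq0n.
  by [] || rewrite /= ?orbF ?andbT.
lia.
Qed.

End Grid.

Lemma arith_fin (M RR NN x : nat) : M <= 4 * RR -> 16 * RR <= NN -> 0 < NN -> x <= M -> 3 * x < NN.
Proof. lia. Qed.

Theorem mainTheorem8 (n : nat) (X : {set grid_vertex n n}) :
  (1 <= n)%N ->
  (2 * #|X| <= n ^ 2)%N ->
  (4 * cut_rank (@cgrid_adj n n) X <= n)%N ->
  (3 * #|X| < n ^ 2)%N.
Proof.
move=> n1 h2 h4.
set r := cut_rank (@cgrid_adj n n) X in h4.
pose p : 'I_n := Ordinal n1.
have hp : nat_of_ord p = 0 by [].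
have hMR := MR_bound X hp; have hMC := MC_bound X hp.
set MR := [set i | rowX X i && rowY X i] in hMR.
set MC := [set j | colX X j && colY X j] in hMC.
have hcard : #|X| + #|~: X| = n * n.
  by rewrite cardsC; apply: (etrans (card_prod _ _)); rewrite !card_ord.
have [i0 hi0] : exists i0, i0 \in ~: MR.
  apply/set0Pn; rewrite -card_gt0.
  have := cardsC MR; rewrite card_ord; lia.
have [j1 hj1] : exists j1, j1 \in ~: MC.
  apply/set0Pn; rewrite -card_gt0.
  have := cardsC MC; rewrite card_ord; lia.
move: hi0 hj1; rewrite !inE !negb_and.
case hx0 : (rowX X i0) => /= hi0 hj1.
- (* all-X row i0 *)
  move/existsPn: hi0 => hi0.
  have hc1 : colX X j1 by apply/existsP; exists i0; move: (hi0 j1); rewrite negbK.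
  rewrite hc1 /= in hj1; move/existsPn: hj1 => hj1.
  have sub : ~: X \subset setX MR MC.
    apply/subsetP => -[i j]; rewrite !inE => hij.
    apply/andP; split; apply/andP; split; apply/existsP.
    + by exists j1; move: (hj1 i); rewrite negbK.
    + by exists j.
    + by exists i0; move: (hi0 j); rewrite negbK.
    + by exists i.
  have := subset_leq_card sub; rewrite cardsX => hs.
  have : #|MR| * #|MC| <= (2 * r) * (2 * r) by apply: leq_mul.
  nia.
- (* all-Y row i0 *)
  move/negbT/existsPn: hx0 => hy0.
  have hc1 : colY X j1 by apply/existsP; exists i0; apply: hy0.
  rewrite hc1 /= orbF in hj1; move/existsPn: hj1 => hj1.
  have sub : X \subset setX MR MC.
    apply/subsetP => -[i j]; rewrite !inE => hij.
    apply/andP; split; apply/andP; split; apply/existsP.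
    + by exists j.
    + by exists j1; apply: hj1.
    + by exists i.
    + by exists i0; apply: hy0.
  have := subset_leq_card sub; rewrite cardsX => hs.
  have : #|MR| * #|MC| <= (2 * r) * (2 * r) by apply: leq_mul.
  have : (4 * r) * (4 * r) <= n * n by apply: leq_mul.
  have : 1 <= n * n by rewrite muln_gt0 n1.
  rewrite -mulnn => hN h16 hM.
  have e1 : 2 * r * (2 * r) = 4 * (r * r) by nia.
  have e2 : 4 * r * (4 * r) = 16 * (r * r) by nia.
  rewrite e1 in hM; rewrite e2 in h16.
  move: hM h16 hN hs; set RR := r * r; set NN := n * n; set M := #|MR| * #|MC|.
  clearbody RR NN M; exact: arith_fin.
Qed.
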